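(* Let $G$ be a countable discrete group acting by a topological partial action $\theta=\{\theta_g\colon Y_{g^{-1}}\to Y_g\}_{g\in G}$ on a compact space $Y$, and let $X$ be a nonempty compact space, with $\hat\theta$ the induced partial action on $C(X,Y)$. Then the following are equivalent: (i) $Y_g$ is clopen for all $g\in G$; (ii) the enveloping space $Y_G$ is Hausdorff; (iii) the enveloping space $C(X,Y)_G$ is Hausdorff.
   Context: A topological partial action of $G$ on $Y$ is a family of homeomorphisms $\theta_g\colon Y_{g^{-1}}\to Y_g$ between open subsets with $Y_e=Y$, $\theta_e=\mathrm{id}_Y$, $\theta_{g^{-1}}=\theta_g^{-1}$, $\theta_g\circ\theta_h$ a restriction of $\theta_{gh}$. $C(X,Y)$ has the compact-open topology; $\hat\theta$ has $C(X,Y)_g=\{f: f(X)\subset Y_g\}$ and $\hat\theta_g(f)=\theta_g\circ f$. For a topological partial action on $W$, the enveloping space is $W_G=(G\times W)/R$ with the quotient topology, where $(g,x)R(h,y)$ iff $x\in W_{g^{-1}h}$ and $\theta_{h^{-1}g}(x)=y$. *)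

(* Defs.v *)
From HB Require Import structures.
From mathcomp Require Import all_boot all_order all_algebra generic_quotient.
From mathcomp Require Import all_classical all_reals all_analysis.

Set Implicit Arguments.
Unset Strict Implicit.
Unset Printing Implicit Defensive.

Local Open Scope classical_set_scope.

Definition is_group (G : Type) (mul : G -> G -> G) (inv : G -> G) (e : G) : Prop :=
  [/\ (forall a b c, mul a (mul b c) = mul (mul a b) c),
      (forall a, mul e a = a /\ mul a e = a) &
      (forall a, mul (inv a) a = e /\ mul a (inv a) = e)].

(** Topological partial action theta = {theta_g : Y_{g^-1} -> Y_g} of G on Y.
    [D g] is the open set Y_g and [th g] is a total function Y -> Y whose
    restriction to Y_{g^-1} is theta_g (its values outside Y_{g^-1} are
    irrelevant). *)
Definition partial_action (G : Type) (mul : G -> G -> G) (inv : G -> G) (e : G)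
    (Y : topologicalType) (D : G -> set Y) (th : G -> Y -> Y) : Prop :=
  (forall g, open (D g)) /\
  D e = [set: Y] /\
  (forall y, th e y = y) /\
      (forall g y, D (inv g) y -> D g (th g y)) /\
      (forall g y, D (inv g) y -> th (inv g) (th g y) = y) /\
      (forall g, {within D (inv g), continuous (th g)}) /\
      (forall g h y, D (inv h) y -> D (inv g) (th h y) ->
         D (inv (mul g h)) y /\ th (mul g h) y = th g (th h y)).

Definition CO (X Y : topologicalType) : Type := continuousType X Y.
HB.instance Definition _ (X Y : topologicalType) := Choice.on (CO X Y).
HB.instance Definition _ (X Y : topologicalType) :=
  Topological.copy (CO X Y)
    (initial_topology (fun f : continuousType X Y => (f : {compact-open, X -> Y}))).

(** The induced partial action hat-theta on C(X,Y):
    C(X,Y)_g = {f | f(X) ⊂ Y_g} and hat-theta_g f = theta_g o f. *)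
Definition hatD (X Y : topologicalType) (G : Type) (D : G -> set Y) (g : G) :
  set (CO X Y) := [set f : CO X Y | forall x : X, D g (f x)].

Definition hatact (X Y : topologicalType) (G : Type) (th : G -> Y -> Y) (g : G)
    (f : CO X Y) : CO X Y :=
  match pselect (continuous (th g \o f)) with
  | left H => (mkcts H : continuousType X Y)
  | right _ => f
  end.

(** Enveloping space W_G = (G x W)/R with the quotient topology (G discrete),
    where (g,x) R (h,y) iff x \in W_{g^-1 h} and theta_{h^-1 g}(x) = y.
    Its points are the R-classes [set q | R p q]. *)
Section enveloping.
Context (G : countType) (mul : G -> G -> G) (inv : G -> G)
  (W : topologicalType) (D : G -> set W) (act : G -> W -> W).

Definition env_rel (p q : (discrete_topology G * W)%type) : Prop :=
  D (mul (inv p.1) q.1) p.2 /\ act (mul (inv q.1) p.1) p.2 = q.2.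

Definition env_classes : Type :=
  {A : set (discrete_topology G * W)%type | exists p, A = env_rel p}.

Definition env_pi (p : (discrete_topology G * W)%type) : env_classes :=
  exist _ (env_rel p) (ex_intro _ p erefl).

Definition env_repr (A : env_classes) : (discrete_topology G * W)%type :=
  proj1_sig (cid (proj2_sig A)).

Lemma env_reprK : cancel env_repr env_pi.
Proof.
move=> [A HA]; rewrite /env_pi /env_repr /=.
case: (cid HA) => p /= Ep; subst A.
by congr exist; exact: Prop_irrelevance.
Qed.

HB.instance Definition _ :=
  isQuotient.Build (discrete_topology G * W)%type env_classes env_reprK.

Definition enveloping_space : topologicalType := quotient_topology env_classes.

End enveloping.

(* Main.v *)
Require Import Defs.
From HB Require Import structures.
From mathcomp Require Import all_boot all_order all_algebra generic_quotient.
From mathcomp Require Import all_classical all_reals all_analysis.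
Local Open Scope classical_set_scope.
Set Implicit Arguments.
Unset Strict Implicit.
Unset Printing Implicit Defensive.
Section Grp.
Context (G : Type) (mul : G -> G -> G) (inv : G -> G) (e : G)
  (Hg : is_group mul inv e).

Lemma g_assoc a b c : mul a (mul b c) = mul (mul a b) c.
Proof. by case: Hg. Qed.
Lemma g_e1 a : mul e a = a. Proof. by case: Hg => _ /(_ a) []. Qed.
Lemma g_1e a : mul a e = a. Proof. by case: Hg => _ /(_ a) []. Qed.
Lemma g_Vl a : mul (inv a) a = e. Proof. by case: Hg => _ _ /(_ a) []. Qed.
Lemma g_Vr a : mul a (inv a) = e. Proof. by case: Hg => _ _ /(_ a) []. Qed.
Lemma g_uniq_inv a b : mul a b = e -> inv a = b.
Proof.
move=> h; rewrite -[inv a]g_1e -h g_assoc g_Vl g_e1 //.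
Qed.
Lemma g_invK a : inv (inv a) = a.
Proof. by apply: g_uniq_inv; rewrite g_Vl. Qed.
Lemma g_invM a b : inv (mul a b) = mul (inv b) (inv a).
Proof.
apply: g_uniq_inv.
by rewrite -g_assoc [mul b _]g_assoc g_Vr g_e1 g_Vr.
Qed.
Lemma g_inve : inv e = e.
Proof. by apply: g_uniq_inv; rewrite g_e1. Qed.
End Grp.

Section PA.
Context (G : countType) (mul : G -> G -> G) (inv : G -> G) (e : G)
  (W : topologicalType) (D : G -> set W) (act : G -> W -> W).

Record PA : Prop := {
  pa_grp : is_group mul inv e;
  pa_open : forall g, open (D g);
  pa_De : D e = [set: W];
  pa_ae : forall y, act e y = y;
  pa_map : forall g y, D (inv g) y -> D g (act g y);
  pa_inv : forall g y, D (inv g) y -> act (inv g) (act g y) = y;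
  pa_cts : forall g O, open O -> open (D (inv g) `&` act g @^-1` O);
  pa_comp : forall g h y, D (inv h) y -> D (inv g) (act h y) ->
         D (inv (mul g h)) y /\ act (mul g h) y = act g (act h y) }.

Hypothesis HP : PA.

Let R := env_rel mul inv D act.

Lemma R_refl p : R p p.
Proof.
case: HP => Hg _ De ae _ _ _ _; rewrite /R /env_rel (g_Vl Hg) De ae //.
Qed.

Lemma R_sym p q : R p q -> R q p.
Proof.
case: HP => Hg _ _ _ Hmap Hinv _ _; case: p q => g y [h z] [/= Hy <-].
have E : inv (mul (inv h) g) = mul (inv g) h by rewrite (g_invM Hg) (g_invK Hg).
split => /=.
  by apply: Hmap; rewrite E.
by rewrite -E Hinv // E.
Qed.

Lemma R_trans p q r : R p q -> R q r -> R p r.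
Proof.
case: HP => Hg _ _ _ _ _ _ Hc.
case: p q r => g1 y1 [g2 y2] [g3 y3] [/= H1 E1] [/= H2 E2]; subst y2 y3.
have := Hc (mul (inv g3) g2) (mul (inv g2) g1) y1.
rewrite !(g_invM Hg) !(g_invK Hg).
case; [exact: H1 | exact: H2 | move=> H3 E3].
have M : mul (mul (inv g3) g2) (mul (inv g2) g1) = mul (inv g3) g1.
  by rewrite -(g_assoc Hg) [mul g2 _](g_assoc Hg) (g_Vr Hg) (g_e1 Hg).
have M' : mul (mul (inv g1) g2) (mul (inv g2) g3) = mul (inv g1) g3.
  by rewrite -(g_assoc Hg) [mul g2 _](g_assoc Hg) (g_Vr Hg) (g_e1 Hg).
split => /=.
  by move: H3; rewrite M'.
by rewrite -E3 M.
Qed.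

Local Open Scope quotient_scope.
Notation Q := (enveloping_space mul inv D act).

Lemma piR p q : \pi_Q p = \pi_Q q <-> R p q.
Proof.
rewrite !unlock.
change (env_pi mul inv D act p = env_pi mul inv D act q <-> R p q); split.
  by move=> [] E; have := R_refl q; rewrite /R -E.
move=> Hpq.
have E : env_rel mul inv D act p = env_rel mul inv D act q.
  apply/funext => r; apply/propext; split.
    by move=> Hpr; apply: R_trans (R_sym Hpq) Hpr.
  by move=> Hqr; apply: R_trans Hpq Hqr.
apply: eq_sig_hprop => [x ? ?|]; [exact: Prop_irrelevance | exact: E].
Qed.

End PA.
Arguments piR {G mul inv e W D act} HP p q.
Arguments R_refl {G mul inv e W D act} HP p.
Section LemA.
Context (G : countType) (mul : G -> G -> G) (inv : G -> G) (e : G)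
  (W : topologicalType) (D : G -> set W) (act : G -> W -> W).
Hypothesis HP : PA mul inv e D act.
Local Open Scope quotient_scope.
Notation Q := (enveloping_space mul inv D act).
Let R := env_rel mul inv D act.

Definition OO (g : G) (U : set W) : set Q :=
  [set c | exists u, U u /\ \pi_Q (g, u) = c].

Lemma OO_open g U : open U -> open (OO g U).
Proof.
move=> oU.
have Hg := pa_grp HP.
change (open (\pi_Q @^-1` OO g U)).
rewrite openE => -[m w] [u [Uu /(piR HP)]] [/= Hu Hw].
set k := mul (inv m) g.
change (act k u = w) in Hw.
have Ek : inv k = mul (inv g) m by rewrite /k (g_invM Hg) (g_invK Hg).
have oV := pa_cts HP (inv k) oU.
rewrite (g_invK Hg) in oV.
have Vw : (D k `&` act (inv k) @^-1` U) w.
  have Du : D (inv k) u by rewrite Ek.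
  split; first by rewrite -Hw; exact (pa_map HP Du).
  by rewrite /= -Hw (pa_inv HP Du).
rewrite /interior.
have -> : nbhs (m, w) = filter_prod (nbhs m) (nbhs w) by [].
exists ([set m], D k `&` act (inv k) @^-1` U).
  split; first exact: discrete_set1.
  by apply: open_nbhs_nbhs; split.
move=> [m' w'] /= [-> [Dw' Uw']].
exists (act (inv k) w'); split => //.
apply/(piR HP) => /=; split.
  rewrite -Ek; apply: (pa_map HP); by rewrite (g_invK Hg).
have := @pa_inv _ _ _ _ _ _ _ HP (inv k) w'; rewrite (g_invK Hg) => -> //.
Qed.


Lemma OO_disj g h U1 U2 :
  (forall u v, U1 u -> U2 v -> ~ R (g, u) (h, v)) -> OO g U1 `&` OO h U2 = set0.
Proof.
move=> H; apply/seteqP; split => // c [[u [U1u Eu]] [v [U2v Ev]]].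
by apply: (H u v U1u U2v); apply/(piR HP); rewrite Eu Ev.
Qed.

Lemma envA : hausdorff_space W -> (forall g, closed (D g)) -> hausdorff_space Q.
Proof.
move=> hW cD.
have Hg := pa_grp HP.
rewrite open_hausdorff => a b hab.
rewrite -[a]reprK -[b]reprK in hab *.
move: (repr a) (repr b) hab => [g y] [h z] /eqP hab.
have nR : ~ R (g, y) (h, z) by move=> /(piR HP).
have [Dy|nDy] := pselect (D (mul (inv g) h) y); last first.
  exists (OO g (~` D (mul (inv g) h)), OO h setT) => /=.
    by rewrite !inE; split; [exists y | exists z].
  split; [apply: OO_open; exact: closed_openC | apply: OO_open; exact: openT|].
  by apply/eqP; apply: OO_disj => u v Du _ [].
have hne : act (mul (inv h) g) y != z by apply/eqP => E; apply: nR.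
move: hW; rewrite open_hausdorff => /(_ _ _ hne) [[A B] /= [Ay Bz] [oA oB AB0]].
set k := mul (inv h) g.
have Ek : inv k = mul (inv g) h by rewrite /k (g_invM Hg) (g_invK Hg).
exists (OO g (D (inv k) `&` act k @^-1` A), OO h B) => /=.
  rewrite !inE; split; [exists y | exists z] => //.
    by rewrite inE in Ay; apply: conj => //; rewrite Ek.
  by rewrite inE in Bz.
split; [apply: OO_open; exact (pa_cts HP k oA) | apply: OO_open; exact: oB |].
apply/eqP; apply: OO_disj => u v [_ Au] Bv [_ /= Euv].
move/eqP: AB0; apply/eqP/set0P; exists v; split => //.
by rewrite -Euv.
Qed.

End LemA.
Section LemB.
Context (G : countType) (mul : G -> G -> G) (inv : G -> G) (e : G)
  (W : topologicalType) (D : G -> set W) (act : G -> W -> W).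
Hypothesis HP : PA mul inv e D act.
Local Open Scope quotient_scope.
Notation Q := (enveloping_space mul inv D act).

Lemma pi_pair_cts (Y : topologicalType) (c : Y -> W) (g : G) :
  continuous c -> continuous (fun y => \pi_Q (g, c y)).
Proof.
move=> cc y A nA.
have := @pi_continuous _ (env_classes mul inv D act) (g, c y) A nA.
case => -[P1 P2] /= [nP1 nP2] sub.
have nc : nbhs y (c @^-1` P2) := cc y P2 nP2.
apply: (filterS _ nc) => y' P2y'.
apply: (sub (g, c y')); split => //.
exact: nbhs_singleton.
Qed.

Lemma envB (Y : topologicalType) (DY : set Y) (t : Y -> Y) (c : Y -> W) (h : G) :
  compact [set: Y] -> hausdorff_space Q -> continuous c ->
  (forall y, DY y -> D h (c y)) -> (forall y, D h (c y) -> DY y) ->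
  (forall y, DY y -> act (inv h) (c y) = c (t y)) ->
  closed DY.
Proof.
move=> Ycpt hQ cc Dc Dc' cact y Hy.
have Hg := pa_grp HP.
pose F := within DY (nbhs y).
have PF : ProperFilter F := @within_nbhs_proper _ DY y Hy.
have [z [_ clz]] := Ycpt (t @ F) _ filterT.
pose phi := fun y' => \pi_Q (e, c y').
pose psi := fun z' => \pi_Q (h, c z').
have Ephi y' : DY y' -> phi y' = psi (t y').
  move=> Dy'; apply/(piR HP) => /=; split.
    by rewrite /= (g_inve Hg) (g_e1 Hg); apply: Dc.
  by rewrite /= (g_1e Hg) cact.
have : phi y = psi z.
  apply: hQ => A B nA nB.
  have nA' : nbhs y (phi @^-1` A) := pi_pair_cts (g:=e) cc nA.
  have nB' : nbhs z (psi @^-1` B) := pi_pair_cts (g:=h) cc nB.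
  have FS : F (DY `&` phi @^-1` A).
    by rewrite /F /within; apply: filterS nA' => y' Ay' Dy'.
  have tF : (t @ F) (t @` (DY `&` phi @^-1` A)).
    by apply: filterS FS => y' Hy'; exists y'.
  have [w [[y' [Dy' Ay'] <-] Bw]] := clz _ _ tF nB'.
  by exists (phi y'); split => //; rewrite Ephi.
move/(piR HP) => [/= + _].
by rewrite (g_inve Hg) (g_e1 Hg); apply: Dc'.
Qed.

End LemB.
Lemma PA_Y (G : countType) (mul : G -> G -> G) (inv : G -> G) (e : G)
  (Y : topologicalType) (D : G -> set Y) (th : G -> Y -> Y) :
  is_group mul inv e -> partial_action mul inv e D th -> PA mul inv e D th.
Proof.
move=> Hg [oD [De [the [Hmap [Hinv [Hcts Hcomp]]]]]].
split => // g O oO.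
have := Hcts g; rewrite continuous_open_subspace // => /continuous_inP.
by move=> /(_ (oD (inv g))) /(_ O oO).
Qed.
Section CO.
Context (X Y : topologicalType).

Definition iota (f : CO X Y) : {compact-open, X -> Y} := (f : X -> Y).

Lemma CO_open_pre (A : set {compact-open, X -> Y}) :
  open A -> open (iota @^-1` A : set (CO X Y)).
Proof. by move=> oA; exists A. Qed.

Lemma CO_open_KO (K : set X) (O : set Y) :
  compact K -> open O -> open [set f : CO X Y | (f : X -> Y) @` K `<=` O].
Proof. by move=> cK oO; apply: (CO_open_pre (compact_open_open cK oO)). Qed.

Lemma CO_hausdorff : hausdorff_space Y -> hausdorff_space (CO X Y).
Proof.
move=> hY; rewrite open_hausdorff => f f' /eqP ff'.
have [x fx] : exists x, f x <> f' x.
  apply: contrapT => H; apply: ff'; apply/continuousEP => x.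
  by apply: contrapT => Hx; apply: H; exists x.
move: hY; rewrite open_hausdorff => /(_ (f x) (f' x)).
case; first exact/eqP.
move=> [A B] /= [Ax Bx] [oA oB /eqP AB].
exists ([set g : CO X Y | (g : X -> Y) @` [set x] `<=` A],
        [set g : CO X Y | (g : X -> Y) @` [set x] `<=` B]) => /=.
  rewrite !inE; split => _ [_ -> <-]; [by rewrite inE in Ax | by rewrite inE in Bx].
split; [exact (CO_open_KO (@compact_set1 _ x) oA) | exact (CO_open_KO (@compact_set1 _ x) oB)|].
apply/eqP/seteqP; split => // g [gA gB].
have : (A `&` B) (g x) by split; [apply: gA | apply: gB]; exists x.
by rewrite AB.
Qed.

End CO.
Section Hat.
Context (G : countType) (mul : G -> G -> G) (inv : G -> G) (e : G)
  (Y X : topologicalType) (D : G -> set Y) (th : G -> Y -> Y).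
Hypothesis HP : PA mul inv e D th.
Hypothesis Xcpt : compact [set: X].

Notation hD := (@hatD X Y G D).
Notation ha := (@hatact X Y G th).

Lemma hatactE g (f : CO X Y) : continuous (th g \o f) -> (ha g f : X -> Y) = th g \o f.
Proof. by move=> H; rewrite /hatact; case: pselect. Qed.

Lemma hat_cts g (f : CO X Y) : hD (inv g) f -> continuous (th g \o f).
Proof.
move=> Hf x A nA.
have oO := pa_cts HP g (@open_interior _ A).
have nO : nbhs (f x) (D (inv g) `&` th g @^-1` interior A).
  by apply: open_nbhs_nbhs; split => //; split => //; exact: Hf.
have nf := @cts_fun _ _ f x _ nO.
have nf' : nbhs x ((f : X -> Y) @^-1` (D (inv g) `&` th g @^-1` interior A)) := nf.
change (nbhs x ((th g \o f) @^-1` A)).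
by apply: (filterS _ nf') => x' [_ /interior_subset].
Qed.

Lemma hatD_open g : open (hD g).
Proof.
have -> : hD g = [set f : CO X Y | (f : X -> Y) @` [set: X] `<=` D g].
  apply/seteqP; split => f /=.
    by move=> H _ [x _ <-].
  by move=> H x; apply: H; exists x.
exact: CO_open_KO Xcpt (pa_open HP g).
Qed.

Lemma hatD_closed g : closed (D g) -> closed (hD g).
Proof.
move=> cD; rewrite -[hD g]setCK; apply: open_closedC.
have -> : ~` hD g = \bigcup_(x in [set: X])
    [set f : CO X Y | (f : X -> Y) @` [set x] `<=` ~` D g].
  apply/seteqP; split => f /=.
    move=> /existsNP [x Hx]; exists x => // _ [_ -> <-]; exact: Hx.
  by move=> [x _ Hx] Hall; apply: (Hx (f x)) => //; exists x.
apply: bigcup_open => x _.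
exact (CO_open_KO (@compact_set1 _ x) (closed_openC cD)).
Qed.

End Hat.
Section Hat2.
Context (G : countType) (mul : G -> G -> G) (inv : G -> G) (e : G)
  (Y X : topologicalType) (D : G -> set Y) (th : G -> Y -> Y).
Hypothesis HP : PA mul inv e D th.
Hypothesis Xcpt : compact [set: X].

Notation hD := (@hatD X Y G D).
Notation ha := (@hatact X Y G th).

Lemma haE g (f : CO X Y) : hD (inv g) f -> (ha g f : X -> Y) = th g \o f.
Proof. by move=> H; apply: hatactE; exact (hat_cts HP H). Qed.

Definition Aset g : set {compact-open, X -> Y} :=
  [set phi | phi @` [set: X] `<=` D (inv g)].

Lemma Phi_cts g : {in Aset g, continuous (fun phi : {compact-open, X -> Y} =>
   (th g \o phi : {compact-open, X -> Y}))}.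
Proof.
move=> phi /set_mem Hphi.
apply/compact_open_cvgP; first by apply: fmap_filter; apply: nbhs_filter.
move=> K O cK oO sub.
have oO' := pa_cts HP g oO.
have nK : nbhs phi [set psi : {compact-open, X -> Y} |
    psi @` K `<=` (D (inv g) `&` th g @^-1` O)].
  apply: open_nbhs_nbhs; split; first exact: compact_open_open.
  move=> _ [x Kx <-]; split; first by apply: Hphi; exists x.
  by apply: sub; exists x.
apply: (filterS _ nK) => psi Hpsi _ [x Kx <-].
by have [_ ] := Hpsi (psi x) (ex_intro2 _ _ x Kx erefl).
Qed.


Lemma PA_hat : PA mul inv e hD ha.
Proof.
have Hg := pa_grp HP.
split => //.
- move=> g; exact (hatD_open HP Xcpt g).
- by apply/seteqP; split => // f _ x; rewrite (pa_De HP).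
- move=> f; apply/continuousEP => x.
  have Hf : hD (inv e) f by move=> y; rewrite (g_inve Hg) (pa_De HP).
  by rewrite (haE Hf) /= (pa_ae HP).
- move=> g f Hf x; rewrite (haE Hf) /=; exact (pa_map HP (Hf x)).
- move=> g f Hf; apply/continuousEP => x.
  have Hf' : hD (inv (inv g)) (ha g f).
    by move=> y; rewrite (g_invK Hg) (haE Hf); exact (pa_map HP (Hf y)).
  by rewrite (haE Hf') /= (haE Hf) /= (pa_inv HP (Hf x)).
- move=> g O [A oA <-].
  have oB : open (Aset g `&` (fun phi : {compact-open, X -> Y} =>
      (th g \o phi : {compact-open, X -> Y})) @^-1` A).
    have oAs : open (Aset g) by exact: compact_open_open Xcpt (pa_open HP _).
    by move/(continuous_inP _ oAs): (Phi_cts (g:=g)); apply.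
  have -> : hD (inv g) `&` ha g @^-1` ((@iota X Y) @^-1` A) =
      (@iota X Y) @^-1` (Aset g `&` (fun phi : {compact-open, X -> Y} =>
      (th g \o phi : {compact-open, X -> Y})) @^-1` A).
    apply/seteqP; split => f /= [Hf HA].
      split; first by move=> _ [x _ <-]; exact: Hf.
      by move: HA; rewrite /iota (haE Hf).
    have Hf' : hD (inv g) f by move=> x; apply: Hf; exists x.
    by split => //; rewrite /iota (haE Hf').
  exact: CO_open_pre oB.
- move=> g h f Hf Hf'.
  have H1 : hD (inv (mul g h)) f.
    move=> x; have := Hf' x; rewrite (haE Hf) /= => Hx.
    by have [] := pa_comp HP (Hf x) Hx.
  split => //; apply/continuousEP => x.
  rewrite (haE H1) (haE Hf') /= (haE Hf) /=.
  have := Hf' x; rewrite (haE Hf) /= => Hx.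
  by have [] := pa_comp HP (Hf x) Hx.
Qed.

End Hat2.
Definition cstc (X Y : topologicalType) (y : Y) : CO X Y :=
  (@cst X Y y : continuousType X Y).

Lemma cst_co_cts (X Y : topologicalType) :
  continuous (fun y : Y => (@cst X Y y : {compact-open, X -> Y})).
Proof.
move=> y; apply/compact_open_cvgP.
move=> K O cK oO sub.
change (nbhs y [set y' : Y | (@cst X Y y') @` K `<=` O]).
have [[k Kk]|K0] := pselect (exists k, K k).
  have Oy : O y by apply: sub; exists k.
  have nO : nbhs y O by apply: open_nbhs_nbhs.
  by apply: (filterS _ nO) => y' Oy' _ [x _ <-].
apply: (filterS _ (@filterT _ (nbhs y) _)) => y' _ z [x Kx _].
by exfalso; apply: K0; exists x.
Qed.

Lemma cstc_cts (X Y : topologicalType) : continuous (@cstc X Y).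
Proof.
apply/continuousP => S [A oA <-].
by move/continuousP: (@cst_co_cts X Y) => /(_ A oA).
Qed.
Unset Implicit Arguments.

Theorem corollary3p6 (G : countType) (mul : G -> G -> G) (inv : G -> G) (e : G)
  (Y X : topologicalType) (D : G -> set Y) (th : G -> Y -> Y) :
  is_group mul inv e ->
  partial_action mul inv e D th ->
  compact [set: Y] -> hausdorff_space Y ->
  compact [set: X] -> hausdorff_space X -> (exists x : X, True) ->
  [<-> (forall g, clopen (D g));
       hausdorff_space (enveloping_space mul inv D th);
       hausdorff_space
         (enveloping_space mul inv (@hatD X Y G D) (@hatact X Y G th))].
Proof.
move=> Hg Hpa Ycpt hY Xcpt hX [x0 _].
have HP := PA_Y Hg Hpa.
have HPh := PA_hat HP Xcpt.
have closedB : hausdorff_space (enveloping_space mul inv D th) -> forall g, closed (D g).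
  move=> H1 g.
  apply: (envB HP (DY := D g) (t := th (inv g)) (c := id) (h := g) Ycpt H1) => //.
  by move=> y A.
tfae.
- move=> H0; apply: (envA HP hY) => g; exact: (H0 g).2.
- move=> H1; apply: (envA HPh (CO_hausdorff hY)) => g.
  exact: (hatD_closed (closedB H1 g)).
- move=> H2 g; split; first exact: (pa_open HP g).
  apply: (envB HPh (DY := D g) (t := th (inv g)) (c := @cstc X Y) (h := g) Ycpt H2).
  + exact: cstc_cts.
  + by move=> y Dy x.
  + by move=> y /(_ x0).
  + move=> y Dy; apply/continuousEP => x.
    have Hc : hatD D (inv (inv g)) (cstc X y) by move=> x'; rewrite (g_invK Hg).
    by rewrite (haE HP Hc).
Qed.
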